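(* Let $n \ge 2$ and let $f : \mathbb{R}^n \to \mathbb{R}$ be a function in $\mathcal{N}^*_n$. Then every level set $f^{-1}(y)$, $y \in \mathbb{R}$, is homeomorphic to an open (possibly empty) subset of $\mathbb{R}^{n-1}$. Consequently, $f$ has unbounded level components, i.e. for every $y\in\mathbb{R}$ every path component of $f^{-1}(y)$ is unbounded.
   Context: $\mathcal{N}^*_n$ (non-singular functions) is the set of functions $\mathbb{R}^n\to\mathbb{R}$ of the form $\nu_\kappa\circ\ell_\kappa\circ\cdots\circ\nu_0\circ\ell_0$ computed by a layered feed-forward network with input dimension $n$, output dimension 1, and all hidden layers of width exactly $n$, where: the activation $\psi:\mathbb{R}\to\mathbb{R}$ is some continuous one-to-one function, each $\nu_i$ applies $\psi$ coordinatewise, each $\ell_i$ ($i<\kappa$) is an affine map $\mathbb{R}^n\to\mathbb{R}^n$ with nonsingular weight matrix, and $\ell_\kappa:\mathbb{R}^n\to\mathbb{R}$ is an affine map with nonzero weight vector. *)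

(* Defs.v *)
From HB Require Import structures.
From mathcomp Require Import all_boot all_order all_algebra.
From mathcomp Require Import all_classical all_reals all_analysis.
Set Implicit Arguments. Unset Strict Implicit. Unset Printing Implicit Defensive.
Import Order.TTheory GRing.Theory Num.Theory.
Import numFieldNormedType.Exports.
Local Open Scope classical_set_scope.
Local Open Scope ring_scope.

Section Defs.
Variable R : realType.

Definition layer (n : nat) (psi : R -> R) (Ab : 'M[R]_n * 'rV[R]_n)
  (x : 'rV[R]_n) : 'rV[R]_n := map_mx psi (x *m Ab.1 + Ab.2).

(* nu_kappa o l_kappa o ... o nu_0 o l_0 ; Ls = [l_0; ...; l_{kappa-1}],
   final affine map l_kappa(x) = x . w + c *)
Definition net_fun (n : nat) (psi : R -> R) (Ls : seq ('M[R]_n * 'rV[R]_n))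
  (w : 'rV[R]_n) (c : R) : 'rV[R]_n -> R :=
  fun x => psi (((foldl (fun v Ab => layer psi Ab v) x Ls) *m w^T) 0 0 + c).

Definition nonsingular_net (n : nat) (f : 'rV[R]_n -> R) : Prop :=
  exists psi : R -> R, continuous psi /\ injective psi /\
  exists (Ls : seq ('M[R]_n * 'rV[R]_n)) (w : 'rV[R]_n) (c : R),
    (forall Ab, Ab \in Ls -> Ab.1 \in unitmx) /\ w != 0 /\
    f = net_fun psi Ls w c.

Definition homeomorphic_sets (T U : topologicalType) (A : set T) (B : set U)
  : Prop :=
  exists (g : T -> U) (h : U -> T),
    {within A, continuous g} /\ {within B, continuous h} /\
    (forall x, A x -> B (g x) /\ h (g x) = x) /\
    (forall u, B u -> A (h u) /\ g (h u) = u).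

Definition path_component (n : nat) (S : set 'rV[R]_n) (x : 'rV[R]_n)
  : set 'rV[R]_n :=
  [set z | exists gamma : R -> 'rV[R]_n,
     {within `[0, 1], continuous gamma} /\
     (forall t, t \in `[0, 1] -> S (gamma t)) /\
     gamma 0 = x /\ gamma 1 = z].

End Defs.

(* Main.v *)
Require Import Defs.
From HB Require Import structures.
From mathcomp Require Import all_boot all_order all_algebra.
From mathcomp Require Import all_classical all_reals all_analysis.
From mathcomp Require Import lra.
Import Order.TTheory GRing.Theory Num.Theory.
Import numFieldNormedType.Exports.
Local Open Scope classical_set_scope.
Local Open Scope ring_scope.

Section Aux.
Variable R : realType.

Lemma cont_ext {T U : topologicalType} (f g : T -> U) x :
  f =1 g -> {for x, continuous g} -> {for x, continuous f}.
Proof. by move=> /funext ->. Qed.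

Lemma cont_add {T : topologicalType} (f g : T -> R) x :
  {for x, continuous f} -> {for x, continuous g} ->
  {for x, continuous (fun y => f y + g y)}.
Proof. move=> a b; exact: (cvgD a b). Qed.

Lemma cont_mul {T : topologicalType} (f g : T -> R) x :
  {for x, continuous f} -> {for x, continuous g} ->
  {for x, continuous (fun y => f y * g y)}.
Proof. move=> a b; exact: (cvgM a b). Qed.

Lemma cont_cst {T U : topologicalType} (a : U) (x : T) :
  {for x, continuous (fun _ : T => a)}.
Proof. exact: cvg_cst. Qed.

Lemma cont_nbhs {T U : topologicalType} (f : T -> U) x (A : set U) :
  {for x, continuous f} -> nbhs (f x) A -> nbhs x (f @^-1` A).
Proof. by move=> fc; apply: fc. Qed.
Arguments cont_nbhs {T U f x A}.

Lemma entry_cont p q (i : 'I_p) (j : 'I_q) :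
  continuous (fun M : 'M[R]_(p,q) => M i j).
Proof.
move=> u A /nbhs_ballP[e /= e0 eA].
apply/nbhs_ballP; exists e => //= v [_ uv]; exact: eA.
Qed.

Lemma mx_cont_at {T : topologicalType} p q (f : T -> 'M[R]_(p,q)) x :
  (forall i j, {for x, continuous (fun y => f y i j)}) -> {for x, continuous f}.
Proof.
move=> fc A /nbhs_ballP[e /= e0 eA].
have : \forall y \near x, forall ij : 'I_p * 'I_q,
    ball (f x (ij.1) (ij.2)) e (f y (ij.1) (ij.2)).
  apply: filter_forall => ij; apply: (fc (ij.1) (ij.2)); exact: nbhsx_ballx.
apply: filterS => y H; apply: eA; split => // i j; exact: (H (i, j)).
Qed.

Lemma cont_sum {T : topologicalType} (I : finType) (F : I -> T -> R) x :
  (forall i, {for x, continuous (F i)}) ->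
  {for x, continuous (fun y => \sum_i F i y)}.
Proof.
move=> Fc; elim: (index_enum I) => [|i s IH] /=.
  apply: (@cont_ext _ _ _ (fun=> 0)); first by move=> y; rewrite big_nil.
  exact: cvg_cst.
apply: (@cont_ext _ _ _ (fun y => F i y + \sum_(j <- s) F j y)).
  by move=> y; rewrite big_cons.
exact: cont_add.
Qed.

Lemma affine_cont p q r (B : 'M[R]_(q, r)) (c : 'M[R]_(p, r)) :
  continuous (fun x : 'M[R]_(p, q) => x *m B + c).
Proof.
move=> x; apply: mx_cont_at => i j.
apply: (@cont_ext _ _ _ (fun y : 'M[R]_(p,q) => \sum_k y i k * B k j + c i j)).
  by move=> y; rewrite !mxE.
apply: cont_add; last exact: cont_cst.
apply: cont_sum => k; apply: cont_mul; last exact: cont_cst.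
exact: entry_cont.
Qed.


Lemma near_cancel (f g : R -> R) (x : R) : cancel f g -> {near x, cancel f g}.
Proof. move=> K; near=> z; exact: K. Unshelve. all: by end_near. Qed.

Lemma near_cont (f : R -> R) (x : R) : continuous f -> {near x, continuous f}.
Proof. move=> K; near=> z; exact: K. Unshelve. all: by end_near. Qed.

Lemma psi_inv (psi : R -> R) : continuous psi -> injective psi ->
  exists psii : R -> R, cancel psi psii /\
    (forall y, range psi y -> {for y, continuous psii}) /\ open (range psi).
Proof.
move=> pc pi.
pose psii := fun y => xget 0 (fun x => psi x = y).
have K : cancel psi psii.
  move=> x; apply: pi.
  by have := @xgetPex _ 0 (fun x' => psi x' = psi x) (ex_intro _ x erefl).
have nK : forall x : R, {near x, cancel psi psii} by move=> x; exact: near_cancel.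
have nC : forall x : R, {near x, continuous psi} by move=> x; exact: near_cont.
exists psii; split => //; split.
  move=> _ [x _ <-].
  exact: (nbhs_singleton (near_can_continuous (nK x) (nC x))).
rewrite openE => _ [x _ <-]; rewrite /interior.
apply: filterS (near_continuous_can_sym (nC x) (nK x)) => y <-.
by exists (psii y).

Qed.

Definition good n (h hi : 'rV[R]_n -> 'rV[R]_n) :=
  [/\ continuous h, cancel h hi, open (range h) &
      forall v, range h v -> {for v, continuous hi}].
Arguments good {n}.

Lemma good_ext n (h h' hi : 'rV[R]_n -> 'rV[R]_n) :
  h =1 h' -> good h hi -> good h' hi.
Proof. by move=> /funext ->. Qed.
Arguments good_ext {n h h' hi}.

Lemma good_comp n (g gi h hi : 'rV[R]_n -> 'rV[R]_n) :
  good g gi -> good h hi -> good (g \o h) (hi \o gi).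
Proof.
move=> [gc gK go gic] [hc hK ho hic]; split.
- move=> x; apply: continuous_comp; [exact: hc | exact: gc].
- by move=> x /=; rewrite gK hK.
- rewrite openE => _ [x _ <-]; rewrite /interior.
  have Hr : range g (g (h x)) by exists (h x).
  have n1 : nbhs (g (h x)) (range g) by move: go; rewrite openE; apply.
  have n2 : nbhs (g (h x)) (gi @^-1` range h).
    apply: (gic _ Hr); rewrite gK; move: ho; rewrite openE; apply.
    by exists x.
  apply: filterS2 n1 n2 => w [u _ <-] [u' _ hu'].
  by exists u' => //=; rewrite hu' gK.
- move=> _ [x _ <-] /=; apply: continuous_comp.
    by apply: gic; exists (h x).
  by rewrite gK; apply: hic; exists x.
Qed.

Lemma good_id n : good (@id 'rV[R]_n) id.
Proof.
rewrite /good; have -> : range (@id 'rV[R]_n) = setT.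
  by apply/seteqP; split => // v _; exists v.
split.
- by move=> x; exact: cvg_id.
- by [].
- exact: openT.
- by move=> v _; exact: cvg_id.
Qed.

Lemma good_aff n (A : 'M[R]_n) (b : 'rV[R]_n) : A \in unitmx ->
  good (fun x => x *m A + b) (fun v => (v - b) *m invmx A).
Proof.
move=> Au; rewrite /good.
have -> : range (fun x => x *m A + b) = setT.
  apply/seteqP; split => // v _; exists ((v - b) *m invmx A) => //.
  by rewrite mulmxKV // subrK.
split.
- exact: affine_cont.
- by move=> x; rewrite addrK mulmxK.
- exact: (@openT ('rV[R]_n : topologicalType)).
- move=> v _; apply: (@cont_ext _ _ _ (fun v : 'rV[R]_n => v *m invmx A + (- b *m invmx A))).
    by move=> u; rewrite mulmxBl mulNmx.
  exact: affine_cont.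
Qed.

Lemma good_P n (psi psii : R -> R) : continuous psi -> cancel psi psii ->
  (forall y, range psi y -> {for y, continuous psii}) -> open (range psi) ->
  good (map_mx psi : 'rV[R]_n -> 'rV[R]_n) (map_mx psii).
Proof.
move=> pc K pic po.
have rP : forall v : 'rV[R]_n, (forall i j, range psi (v i j)) ->
    range (map_mx psi) v.
  move=> v H; exists (map_mx psii v) => //; apply/matrixP => i j.
  by rewrite !mxE; have [u _ <-] := H i j; rewrite K.
have Pr : forall v : 'rV[R]_n, range (map_mx psi) v -> forall i j, range psi (v i j).
  by move=> _ [u _ <-] i j; rewrite mxE; exists (u i j).
split.
- move=> x; apply: mx_cont_at => i j.
  apply: (@cont_ext _ _ _ (fun y : 'rV[R]_n => psi (y i j))); first by move=> y; rewrite mxE.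
  apply: continuous_comp; [exact: entry_cont | exact: pc].
- by move=> v; apply/matrixP => i j; rewrite !mxE K.
- rewrite openE => v /Pr H; rewrite /interior.
  have H2 : forall ij : 'I_1 * 'I_n,
      nbhs v [set w : 'rV[R]_n | range psi (w (ij.1) (ij.2))].
    move=> ij; apply: (@cont_nbhs _ _ _ v (range psi) (@entry_cont 1 n (ij.1) (ij.2) v)).
    by move: po; rewrite openE; apply; exact: H.
  have := @filter_forall _ _ (fun ij (w : 'rV[R]_n) => range psi (w (ij.1) (ij.2)))
     (nbhs v) (@nbhs_filter _ v) H2.
  by apply: filterS => w Hw; apply: rP => i j; exact: (Hw (i, j)).
- move=> v /Pr H; apply: mx_cont_at => i j.
  apply: (@cont_ext _ _ _ (fun y : 'rV[R]_n => psii (y i j))); first by move=> y; rewrite mxE.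
  apply: continuous_comp; [exact: entry_cont | exact: pic].
Qed.

Lemma good_layer n (psi psii : R -> R) (Ab : 'M[R]_n * 'rV[R]_n) :
  continuous psi -> cancel psi psii ->
  (forall y, range psi y -> {for y, continuous psii}) -> open (range psi) ->
  Ab.1 \in unitmx ->
  exists hi, good (layer psi Ab) hi.
Proof.
move=> pc K pic po Au; eexists.
apply: (good_ext _ (@good_comp n _ _ _ _ (@good_P n psi psii pc K pic po) (@good_aff n (Ab.1) (Ab.2) Au))).
by [].
Qed.

Lemma good_net n (psi : R -> R) (Ls : seq ('M[R]_n * 'rV[R]_n)) :
  continuous psi -> injective psi ->
  (forall Ab, Ab \in Ls -> Ab.1 \in unitmx) ->
  exists hi, good (fun x => foldl (fun v Ab => layer psi Ab v) x Ls) hi.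
Proof.
move=> pc pi; have [psii [K [pic po]]] := @psi_inv psi pc pi.
elim/last_ind: Ls => [|Ls Ab IH] HL.
  by exists id; exact: good_id.
have HL' : forall Ab', Ab' \in Ls -> Ab'.1 \in unitmx.
  by move=> Ab' H; apply: HL; rewrite mem_rcons in_cons H orbT.
have [hi Hg] := IH HL'.
have HA : Ab.1 \in unitmx by apply: HL; rewrite mem_rcons mem_head.
have [li Hl] := @good_layer n psi psii Ab pc K pic po HA.
eexists; apply: (good_ext _ (@good_comp n _ _ _ _ Hl Hg)).
by move=> x /=; rewrite foldl_rcons.
Qed.

Lemma unbounded N p (L : set 'rV[R]_N) (U : set 'rV[R]_p.+1)
    (g : 'rV[R]_N -> 'rV[R]_p.+1) (hh : 'rV[R]_p.+1 -> 'rV[R]_N) x0 :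
  closed L -> open U -> continuous g ->
  (forall z, U z -> {for z, continuous hh}) ->
  (forall x, L x -> U (g x) /\ hh (g x) = x) ->
  (forall z, U z -> L (hh z) /\ g (hh z) = z) ->
  L x0 -> ~ bounded_set (path_component L x0).
Proof.
move=> Lc Uo gc hhc gL hhU Lx0 [M [Mreal HM]].
pose M1 := `|M| + 1.
have M1gt0 : 0 < M1 by rewrite /M1; apply: ltr_pwDr => //.
have PM : forall z, path_component L x0 z -> `|z| <= M1.
  move=> z Pz; apply: (HM M1) => //.
  by rewrite /M1 (le_lt_trans (ler_norm M)) // ltrDl.
pose K := L `&` [set x : 'rV[R]_N | `|x| <= M1].
have Kc : compact K.
  apply: bounded_closed_compact.
    exists M1; split; first exact: num_real.
    by move=> r Mr x [_ Hx]; exact: (le_trans Hx (ltW Mr)).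
  apply: closedI => //.
  have -> : [set x : 'rV[R]_N | `|x| <= M1] = closed_ball 0 M1.
    rewrite closed_ballE //; apply/seteqP; split => x; rewrite /closed_ball_ /= sub0r normrN //.
  exact: closed_ball_closed.
pose GK := g @` K.
have GKc : compact GK by apply: continuous_compact Kc; exact: continuous_subspaceT.
have GKcl : closed GK by apply: compact_closed => //; exact: norm_hausdorff.
have [B [Breal HB]] := compact_bounded GKc.
have GKB : forall z, GK z -> `|z| <= `|B| + 1.
  by move=> z Hz; apply: (HB (`|B| + 1)) => //; rewrite (le_lt_trans (ler_norm B)) // ltrDl.
have GKU : GK `<=` U by move=> _ [x [Lx _] <-]; exact: (gL x Lx).1.
pose z0 := g x0.
pose e : 'rV[R]_p.+1 := const_mx 1.
have e0 : e != 0.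
  apply/eqP => /matrixP /(_ 0 0); rewrite !mxE => /eqP; by rewrite oner_eq0.
pose phi := fun s : R => z0 + s *: e.
have phic : continuous phi.
  move=> s; apply: mx_cont_at => i j.
  apply: (@cont_ext _ _ _ (fun r : R => z0 i j + r * e i j)).
    by move=> r; rewrite !mxE.
  apply: cont_add; first exact: cont_cst.
  apply: cont_mul; [exact: cvg_id | exact: cont_cst].
have claimA : forall s, 0 <= s -> (forall r, 0 <= r <= s -> U (phi r)) -> GK (phi s).
  move=> s s0 Hs.
  have Ppt : path_component L x0 (hh (phi s)).
    exists (fun t => hh (phi (t * s))); split; [|split; [|split]].
    - apply: continuous_in_subspaceT => t; rewrite inE /= in_itv /= => /andP[t0 t1].
      have Ut : U (phi (t * s)).
        by apply: Hs; rewrite mulr_ge0 //= ler_piMl.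
      have ps : {for t, continuous (fun t : R => phi (t * s))}.
        exact: (@continuous_comp _ _ _ (fun t : R => t * s) phi t
                  (cont_mul _ _ _ (@cvg_id _ _) (cont_cst _ _)) (phic _)).
      exact: (@continuous_comp _ _ _ (fun t : R => phi (t * s)) hh t ps (hhc _ Ut)).
    - move=> t; rewrite in_itv /= => /andP[t0 t1].
      by apply: (hhU _ _).1; apply: Hs; rewrite mulr_ge0 //= ler_piMl.
    - by rewrite /phi mul0r scale0r addr0 (gL x0 Lx0).2.
    - by rewrite mul1r.
  have Us : U (phi s) by apply: Hs; rewrite s0 lexx.
  exists (hh (phi s)); last exact: (hhU _ Us).2.
  split; [exact: (hhU _ Us).1 | exact: PM].
pose S := [set s | 0 <= s /\ forall r, 0 <= r <= s -> U (phi r)].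
have S0 : S 0.
  split => // r /andP[r0 r0'].
  have -> : r = 0 by apply/le_anti; rewrite r0 r0'.
  by rewrite /phi scale0r addr0; exact: (gL x0 Lx0).1.
have eg0 : 0 < `|e| by rewrite normr_gt0.
have Sub : has_ubound S.
  exists ((`|B| + 1 + `|z0|) / `|e|) => s [s0 Hs].
  have := GKB _ (claimA s s0 Hs).
  rewrite ler_pdivlMr //.
  have -> : s * `|e| = `|phi s - z0|.
    by rewrite /phi addrC addKr normrZ ger0_norm.
  move=> H; apply: (le_trans (ler_normB _ _)); lra.
have hS : has_sup S by split => //; exists 0.
pose ss := sup S.
have ss0 : 0 <= ss by exact: (sup_upper_bound hS S0).
have GKss : GK (phi ss).
  rewrite ((closure_id GK).1 GKcl).
  move=> A /(cont_nbhs (phic ss)) /(closure_sup (ex_intro _ 0 S0) Sub) [s [Ss As]].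
  exists (phi s); split => //; exact: claimA (Ss.1) (Ss.2).
have : nbhs ss (phi @^-1` U).
  apply: (cont_nbhs (phic ss)); move: Uo; rewrite openE; apply; exact: GKU.
move=> /nbhs_ballP [d /= d0 Hd].
have Ss1 : S (ss + d / 2).
  split; first by rewrite addr_ge0 // divr_ge0 // ltW.
  move=> r /andP[r0 r1].
  case: (ltP r ss) => [rlt|rge].
    have [s' Ss' lt] := sup_adherent (ltac:(rewrite subr_gt0; exact: rlt) : 0 < ss - r) hS.
    apply: (Ss'.2 r); rewrite r0 /=; rewrite -/ss in lt; apply: ltW; lra.
  apply: Hd; rewrite /ball /= distrC ger0_norm ?subr_ge0 //; lra.
have := sup_upper_bound hS Ss1; rewrite -/ss; lra.
Qed.

Lemma cont_sub {T : topologicalType} (f g : T -> R) x :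
  {for x, continuous f} -> {for x, continuous g} ->
  {for x, continuous (fun y => f y - g y)}.
Proof. move=> a b; exact: (cvgB a b). Qed.

Lemma closed1 (y : R) : closed [set y].
Proof. exact/accessible_closed_set1/hausdorff_accessible/Rhausdorff. Qed.

End Aux.

Theorem lemma3 (R : realType) (n : nat) (f : 'rV[R]_n -> R) :
  (2 <= n)%N -> nonsingular_net f ->
  (forall y : R, exists U : set 'rV[R]_(n.-1),
      open U /\ homeomorphic_sets (f @^-1` [set y]) U) /\
  (forall (y : R) (x : 'rV[R]_n), f x = y ->
      ~ bounded_set (path_component (f @^-1` [set y]) x)).
Proof.
case: n f => [|[|m]] f // _ [psi [pc [pi [Ls [w [c [HL [w0 ->]]]]]]]].
pose h := fun x : 'rV[R]_m.+2 => foldl (fun v Ab => layer psi Ab v) x Ls.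
have [hi [hc hK ho hic]] := @good_net R _ psi Ls pc pi HL.
rewrite -/h in hc hK ho hic.
have [k wk] : exists k, w 0 k != 0.
  have : ~ (forall k, w 0 k = 0).
    move=> H; move/eqP: w0; apply; apply/matrixP => i j.
    by rewrite (ord1 i) H mxE.
  by move=> /existsNP [k /eqP wk]; exists k.
pose dot := fun v : 'rV[R]_m.+2 => \sum_i v 0 i * w 0 i.
have dotE : forall v, (v *m w^T) 0 0 = dot v.
  by move=> v; rewrite mxE; apply: eq_bigr => i _; rewrite mxE.
pose F := net_fun psi Ls w c.
have FE : forall x, F x = psi (dot (h x) + c) by move=> x; rewrite /F /net_fun dotE.
have key : forall y, exists (U : set 'rV[R]_m.+1) g hh, [/\ open U, continuous g,
    (forall z, U z -> {for z, continuous hh}),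
    (forall x, (F @^-1` [set y]) x -> U (g x) /\ hh (g x) = x) &
    (forall z, U z -> (F @^-1` [set y]) (hh z) /\ g (hh z) = z)].
  move=> y; case: (pselect (exists t, psi t = y)); last first.
    move=> Ny; exists set0, (fun _ => 0), (fun _ => 0); split => //.
    - by move=> x; exact: cont_cst.
    - move=> x; rewrite /preimage /= FE => Hx; exfalso; apply: Ny.
      by exists (dot (h x) + c).
  move=> [t <-].
  pose tt := t - c.
  pose del := fun v : 'rV[R]_m.+2 => \row_j v 0 (lift k j) : 'rV[R]_m.+1.
  pose ins := fun z : 'rV[R]_m.+1 => \row_i
     (if unlift k i is Some j then z 0 j
      else (tt - \sum_j z 0 j * w 0 (lift k j)) / w 0 k) : 'rV[R]_m.+2.
  have F1 : forall z, del (ins z) = z.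
    by move=> z; apply/matrixP => i j; rewrite (ord1 i) !mxE liftK.
  have dotS : forall v, dot v = v 0 k * w 0 k + \sum_j v 0 (lift k j) * w 0 (lift k j).
    by move=> v; rewrite /dot (bigD1_ord k) //.
  have insE : forall z j, ins z 0 (lift k j) = z 0 j.
    by move=> z j; rewrite /ins mxE liftK.
  have insk : forall z, ins z 0 k = (tt - \sum_j z 0 j * w 0 (lift k j)) / w 0 k.
    by move=> z; rewrite /ins mxE unlift_none.
  have F2 : forall z, dot (ins z) = tt.
    move=> z; rewrite dotS; under eq_bigr => j _ do rewrite insE.
    by rewrite insk divfK // subrK.
  have F3 : forall v, dot v = tt -> ins (del v) = v.
    move=> v Hv; apply/matrixP => i j; rewrite (ord1 i) !mxE.
    case: unliftP => [j'|] ->; first by rewrite mxE.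
    rewrite (eq_bigr (fun j => v 0 (lift k j) * w 0 (lift k j))); last first.
      by move=> j0 _; rewrite mxE.
    by rewrite -Hv dotS addrK mulfK.
  have insc : continuous ins.
    move=> z; apply: mx_cont_at => i j.
    apply: (@cont_ext _ _ _ (fun z : 'rV[R]_m.+1 => if unlift k j is Some j' then z 0 j'
      else (tt - \sum_l z 0 l * w 0 (lift k l)) / w 0 k)); first by move=> z'; rewrite mxE.
    case: (unlift k j) => [j'|]; first exact: entry_cont.
    apply: cont_mul; last exact: cont_cst.
    apply: cont_sub; first exact: cont_cst.
    apply: cont_sum => l; apply: cont_mul; [exact: entry_cont | exact: cont_cst].
  have delc : continuous del.
    move=> v; apply: mx_cont_at => i j.
    apply: (@cont_ext _ _ _ (fun v : 'rV[R]_m.+2 => v 0 (lift k j))); first by move=> v'; rewrite mxE.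
    exact: entry_cont.
  have Lx : forall x, (F @^-1` [set psi t]) x -> dot (h x) = tt.
    move=> x; rewrite /preimage /= FE => /pi Hx.
    by rewrite /tt -Hx addrK.
  exists (ins @^-1` range h), (del \o h), (hi \o ins); split.
  - by apply: open_comp => // z _; exact: insc.
  - by move=> x; apply: continuous_comp; [exact: hc | exact: delc].
  - by move=> z Hz; apply: continuous_comp; [exact: insc | exact: hic].
  - move=> x /Lx Hx /=; rewrite F3 //; split; [by exists x | exact: hK].
  - move=> z [u _ hu] /=; rewrite -hu hK; split; last by rewrite hu F1.
    by rewrite /preimage /= FE hu F2 /tt subrK.
split.
  move=> y; have [U [g [hh [Uo gc hhc gL hhU]]]] := key y.
  exists U; split => //; exists g, hh; split; [|split] => //.
  - exact: continuous_subspaceT.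
  - apply: continuous_in_subspaceT => z; rewrite inE; exact: hhc.
move=> y x Fx; have [U [g [hh [Uo gc hhc gL hhU]]]] := key y.
apply: (@unbounded R _ _ _ U g hh) => //.
apply: preimage_closed; last exact: closed1.
move=> x' _; apply: (@cont_ext _ _ _ (fun x => psi (dot (h x) + c))); first exact: FE.
apply: continuous_comp; last exact: pc.
apply: cont_add; last exact: cont_cst.
apply: (@continuous_comp _ _ _ h dot); first exact: hc.
apply: cont_sum => i; apply: cont_mul; [exact: entry_cont | exact: cont_cst].
Qed.
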